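(* Let $(\mathcal{A},\varphi)$ be a non-commutative space and let $(\mathcal{A}_{1,\ell},\mathcal{A}_{1,r})$ and $(\mathcal{A}_{2,\ell},\mathcal{A}_{2,r})$ be pairs of subalgebras of $\mathcal{A}$ which are bi-monotonically independent (in the order $1<2$) with respect to $\varphi$. Let $n\ge 1$, $\chi:\{1,\dots,n\}\to\{\ell,r\}$, $\omega:\{1,\dots,n\}\to\{1,2\}$, and $a_1,\dots,a_n\in\mathcal{A}$ with $a_j\in\mathcal{A}_{\omega(j),\chi(j)}$ for all $j$. Then \[ \varphi(a_1\cdots a_n)=\varphi(a_W)\prod_{\substack{V\in\pi_{\chi,\omega}\\ \omega(V)=2}}\varphi(a_V), \qquad W=\{j\in\{1,\dots,n\}:\omega(j)=1\}. \]
   Context: A non-commutative space $(\mathcal{A},\varphi)$ is a complex algebra $\mathcal{A}$ with a linear functional $\varphi$, with $\varphi(1)=1$ if $\mathcal{A}$ is unital. For algebras $\mathcal{C}_k$, $\sqcup_k\mathcal{C}_k$ denotes the free product without identification of units, $*_k\mathcal{C}_k$ denotes the free product of unital algebras with identification of units, and $\widetilde{\mathcal{C}}=\mathbb{C}1\oplus\mathcal{C}$ denotes the unitization; one has $\widetilde{\mathcal{C}_1}*\widetilde{\mathcal{C}_2}\cong\widetilde{\mathcal{C}_1\sqcup\mathcal{C}_2}$. Notation. For $n\ge1$ and $\chi:\{1,\dots,n\}\to\{\ell,r\}$ with $\chi^{-1}(\{\ell\})=\{i_1<\dots<i_p\}$ and $\chi^{-1}(\{r\})=\{i_{p+1}>\dots>i_n\}$,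 let $\prec_\chi$ be the total order $i_1\prec_\chi i_2\prec_\chi\cdots\prec_\chi i_n$ on $\{1,\dots,n\}$. A $\chi$-interval is a subset of $\{1,\dots,n\}$ which is an interval for $\prec_\chi$. For $V=\{v_1<\dots<v_s\}\subseteq\{1,\dots,n\}$ write $a_V=a_{v_1}\cdots a_{v_s}$ (product in increasing index order) and $(a_1,\dots,a_n)|_V=(a_{v_1},\dots,a_{v_s})$; by convention a functional applied to the empty product equals $1$. For $\omega:\{1,\dots,n\}\to K$, $\pi_{\chi,\omega}$ is the unique partition of $\{1,\dots,n\}$ into blocks $V_1,\dots,V_m$ such that each $V_k$ is a $\chi$-interval, $\max_{\prec_\chi}V_k\prec_\chi\min_{\prec_\chi}V_{k+1}$, $\omega$ is constant on each $V_k$ (value $\omega(V_k)$), and $\omega(V_k)\ne\omega(V_{k+1})$ for $1\le k\le m-1$. c-bi-free product. Given pairs of unital algebras $(\mathcal{B}_{k,\ell},\mathcal{B}_{k,r})_{k\in K}$ and unital linear functionals $\varphi_k,\psi_k$ on $\mathcal{B}_{k,\ell}*\mathcal{B}_{k,r}$, their c-bi-free product $(\varphi,\psi)=*\!*_k(\varphi_k,\psi_k)$ is the unique pair of unital linear functionals on $*_k(\mathcal{B}_{k,\ell}*\mathcal{B}_{k,r})$ restricting to $\varphi_k,\psi_k$ on each $\mathcal{B}_{k,\ell}*\mathcal{B}_{k,r}$ and such that whenever $n\ge1$, $\chi:\{1,\dots,n\}\to\{\ell,r\}$, $\omega:\{1,\dots,n\}\to K$, $b_j\in\mathcal{B}_{\omega(j),\chi(j)}$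 and $\psi(b_V)=0$ for all $V\in\pi_{\chi,\omega}$, then $\psi(b_1\cdots b_n)=0$ and $\varphi(b_1\cdots b_n)=\prod_{V\in\pi_{\chi,\omega}}\varphi(b_V)$. Bi-monotonic product. Let $(\mathcal{A}_{k,\ell},\mathcal{A}_{k,r})$, $k=1,2$, be pairs of algebras with linear functionals $\varphi_k$ on $\mathcal{A}_{k,\ell}\sqcup\mathcal{A}_{k,r}$. Let $\widetilde{\varphi_k}$ be the unital extension of $\varphi_k$ to $\widetilde{\mathcal{A}_{k,\ell}}*\widetilde{\mathcal{A}_{k,r}}\cong\widetilde{\mathcal{A}_{k,\ell}\sqcup\mathcal{A}_{k,r}}$, and $\delta_1$ the unital functional on $\widetilde{\mathcal{A}_{1,\ell}\sqcup\mathcal{A}_{1,r}}$ vanishing on $\mathcal{A}_{1,\ell}\sqcup\mathcal{A}_{1,r}$. Let $(\widetilde\varphi,\widetilde\psi)$ be the c-bi-free product of $(\widetilde{\varphi_1},\delta_1)$ and $(\widetilde{\varphi_2},\widetilde{\varphi_2})$ for the pairs $(\widetilde{\mathcal{A}_{k,\ell}},\widetilde{\mathcal{A}_{k,r}})$, $k=1,2$. The bi-monotonic product $\varphi_1\rhd\!\!\rhd\varphi_2$ is the restriction of $\widetilde\varphi$ to $(\mathcal{A}_{1,\ell}\sqcup\mathcal{A}_{1,r})\sqcup(\mathcal{A}_{2,\ell}\sqcup\mathcal{A}_{2,r})$. Bi-monotonic independence of two pairs. Pairs of subalgebras $(\mathcal{A}_{1,\ell},\mathcal{A}_{1,r}),(\mathcal{A}_{2,\ell},\mathcal{A}_{2,r})$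 of $(\mathcal{A},\varphi)$ are bi-monotonically independent (in the order $1<2$) if $\varphi\circ\iota=\varphi_1\rhd\!\!\rhd\varphi_2$, where $\iota:(\mathcal{A}_{1,\ell}\sqcup\mathcal{A}_{1,r})\sqcup(\mathcal{A}_{2,\ell}\sqcup\mathcal{A}_{2,r})\to\mathcal{A}$ is the homomorphism induced by the inclusions and $\varphi_k=\varphi\circ\iota|_{\mathcal{A}_{k,\ell}\sqcup\mathcal{A}_{k,r}}$. *)

(* Defs.v *)
From HB Require Import structures.
From mathcomp Require Import all_boot all_order all_algebra.
Set Implicit Arguments. Unset Strict Implicit. Unset Printing Implicit Defensive.
Import Order.TTheory GRing.Theory.
Local Open Scope ring_scope.

Inductive side := Lft | Rgt.
Definition is_left (s : side) : bool := if s is Lft then true else false.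

Definition is_nonunital_alg (F : fieldType) (A : lmodType F) (mul : A -> A -> A) :=
  [/\ forall x y z, mul x (mul y z) = mul (mul x y) z,
      forall (c : F) x y z, mul (c *: x + y) z = c *: mul x z + mul y z
    & forall (c : F) x y z, mul z (c *: x + y) = c *: mul z x + mul z y].

Definition is_unit_of (A : Type) (mul : A -> A -> A) (e : A) :=
  forall x, mul e x = x /\ mul x e = x.

Definition is_lin_fun (F : fieldType) (V : lmodType F) (f : V -> F) :=
  forall (c : F) x y, f (c *: x + y) = c * f x + f y.

Definition is_subalg (F : fieldType) (A : lmodType F) (mul : A -> A -> A)
  (P : A -> Prop) :=
  [/\ P 0, forall (c : F) x y, P x -> P y -> P (c *: x + y)
    & forall x y, P x -> P y -> P (mul x y)].

(* functional applied to a product s_1 ... s_k (in that order), with the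
   convention that it equals 1 on the empty product *)
Definition wordval (F : fieldType) (A : Type) (mul : A -> A -> A) (f : A -> F)
  (s : seq A) : F :=
  if s is x :: s' then f (foldl mul x s') else 1.

(* the total order prec_chi, listed increasingly *)
Definition ord_chi (n : nat) (chi : 'I_n -> side) : seq 'I_n :=
  [seq i <- enum 'I_n | is_left (chi i)] ++
  rev [seq i <- enum 'I_n | ~~ is_left (chi i)].

Fixpoint runs (T : Type) (f : T -> nat) (s : seq T) : seq (seq T) :=
  match s with
  | [::] => [::]
  | x :: s' =>
      match runs f s' with
      | (y :: r) :: rest =>
          if f x == f y then (x :: y :: r) :: rest
          else [:: x] :: (y :: r) :: rest
      | _ => [:: [:: x]]
      end
  end.

Definition pi_co (n : nat) (chi : 'I_n -> side) (omega : 'I_n -> nat)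
  : seq (seq 'I_n) := runs omega (ord_chi chi).

Definition blockval (n : nat) (omega : 'I_n -> nat) (V : seq 'I_n) : nat :=
  if V is i :: _ then omega i else 0.

Definition incr (n : nat) (V : seq 'I_n) : seq 'I_n :=
  [seq i <- enum 'I_n | i \in V].

(* ---------- c-bi-free product, realized on a unital algebra B ----------
   Bs k s : the unital subalgebra B_{k,s}; (pt, ps) = (varphi, psi). *)
Definition cbifree_cond (F : fieldType) (B : algType F)
  (Bs : nat -> side -> B -> Prop) (pt ps : B -> F) :=
  forall (n : nat) (chi : 'I_n -> side) (omega : 'I_n -> nat) (b : 'I_n -> B),
    (0 < n)%N ->
    (forall j, Bs (omega j) (chi j) (b j)) ->
    (forall V, V \in pi_co chi omega -> ps (\prod_(j <- incr V) b j) = 0) ->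
    ps (\prod_(j < n) b j) = 0 /\
    pt (\prod_(j < n) b j) =
      \prod_(V <- pi_co chi omega) pt (\prod_(j <- incr V) b j).

(* ---------- bi-monotonic independence of the pairs
   (Asub 1 Lft, Asub 1 Rgt), (Asub 2 Lft, Asub 2 Rgt) w.r.t. phi ----------
   varphi o iota = varphi_1 |>|> varphi_2 is expressed through a realization
   of the c-bi-free product of (tilde varphi_1, delta_1) and
   (tilde varphi_2, tilde varphi_2): a unital algebra B, maps
   jm k s : A_{k,s} -> B (homomorphisms on A_{k,s}, playing the role of the
   free product embeddings of the unitizations), and unital functionals
   pt, ps on B which satisfy the c-bi-free condition w.r.t. the unital
   subalgebras C1 + jm k s (A_{k,s}), restrict on words in A_{1,.} to
   (tilde varphi_1, delta_1) and on words in A_{2,.} to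
   (tilde varphi_2, tilde varphi_2), and such that pt agrees with phi on all
   words a_1 ... a_n, a_i in A_{omega i, chi i}. *)
Definition bimonotone_indep (F : fieldType) (A : lmodType F)
  (mul : A -> A -> A) (phi : A -> F) (Asub : nat -> side -> A -> Prop) :=
  exists (B : algType F) (jm : nat -> side -> A -> B) (pt ps : B -> F),
        (forall k s, (k = 1 \/ k = 2)%N ->
          ((forall (c : F) x y, Asub k s x -> Asub k s y ->
             jm k s (c *: x + y) = c *: jm k s x + jm k s y) /\
          (forall x y, Asub k s x -> Asub k s y ->
             jm k s (mul x y) = jm k s x * jm k s y))) /\
        (is_lin_fun pt /\ is_lin_fun ps /\ pt 1 = 1 /\ ps 1 = 1) /\
        cbifree_cond
          (fun k s b => (k = 1 \/ k = 2)%N /\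
                        exists (c : F) x, Asub k s x /\ b = c%:A + jm k s x)
          pt ps /\
      (forall (m : nat) (chi : 'I_m -> side) (x : 'I_m -> A),
           (forall i, Asub 1%N (chi i) (x i)) ->
           pt (\prod_(i < m) jm 1%N (chi i) (x i)) =
             wordval mul phi [seq x i | i <- enum 'I_m] /\
           ps (\prod_(i < m) jm 1%N (chi i) (x i)) = (m == 0%N)%:R) /\
        (forall (m : nat) (chi : 'I_m -> side) (x : 'I_m -> A),
           (forall i, Asub 2%N (chi i) (x i)) ->
           pt (\prod_(i < m) jm 2%N (chi i) (x i)) =
             wordval mul phi [seq x i | i <- enum 'I_m] /\
           ps (\prod_(i < m) jm 2%N (chi i) (x i)) =
             wordval mul phi [seq x i | i <- enum 'I_m]) /\
        forall (m : nat) (chi : 'I_m -> side) (omega : 'I_m -> nat)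
               (x : 'I_m -> A),
          (forall i, omega i = 1%N \/ omega i = 2%N) ->
          (forall i, Asub (omega i) (chi i) (x i)) ->
          wordval mul phi [seq x i | i <- enum 'I_m] =
            pt (\prod_(i < m) jm (omega i) (chi i) (x i)).

(* Main.v *)
Require Import Defs.
From HB Require Import structures.
From mathcomp Require Import all_boot all_order all_algebra.
From Stdlib Require Import FunctionalExtensionality.
Set Implicit Arguments. Unset Strict Implicit. Unset Printing Implicit Defensive.
Import GRing.Theory.
Local Open Scope ring_scope.

Definition hv (T : Type) (f : T -> nat) (V : seq T) : nat :=
  if V is x :: _ then f x else 0.

Fixpoint alt (T : Type) (h : T -> nat) (L : seq T) : bool :=
  if L is x :: L' then (if L' is y :: _ then (h x != h y) else true) && alt h L'
  else true.

Lemma runs_nonnil (T : Type) (f : T -> nat) s : all (fun V => size V != 0) (runs f s).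
Proof.
elim: s => [|x s IH] //=.
move: IH; case: (runs f s) => [|[|y r] rest] //=.
case: ifP => _ /= -> //.
Qed.

Lemma runs_flatten (T : Type) (f : T -> nat) s : flatten (runs f s) = s.
Proof.
elim: s => [|x s IH] //=.
move: IH (runs_nonnil f s); case: (runs f s) => [|[|y r] rest] //=.
- by move=> <-.
- by case: ifP => _ <-.
Qed.

Lemma runs_head (T : Type) (f : T -> nat) z L :
  exists R rest, runs f (z :: L) = (z :: R) :: rest.
Proof.
rewrite /=; case: (runs f L) => [|[|y r] rest]; try by do 2 eexists.
by case: ifP; do 2 eexists.
Qed.

Lemma runs_const (T : Type) (f : T -> nat) s :
  all (fun V => if V is x :: r then all (fun y => f y == f x) r else false) (runs f s).
Proof.
elim: s => [|x s IH] //=.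
move: IH; case: (runs f s) => [|[|y r] rest] //=.
case: ifP => /eqP Hxy /= /andP [H1 H2]; rewrite ?H2 ?H1 ?andbT //=.
by rewrite Hxy eqxx /=.
Qed.

Lemma runs_alt (T : Type) (f : T -> nat) s : alt (hv f) (runs f s).
Proof.
elim: s => [|x s IH] //=.
move: IH (runs_nonnil f s); case: (runs f s) => [|[|y r] rest] //=.
case: ifP => /eqP Hxy /=.
- by case: rest => [|V rest] //=; rewrite Hxy.
- move=> -> _; rewrite andbT; by apply/eqP.
Qed.

Lemma runs_swap (T : Type) (h : T -> nat) z z' L : h z = h z' ->
  runs h (z' :: L) = (z' :: behead (head [::] (runs h (z :: L)))) :: behead (runs h (z :: L)).
Proof.
move=> E /=; case: (runs h L) => [|[|y r] rest] //=.
by rewrite E; case: ifP.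
Qed.

Lemma runs_coarsen (T : Type) (f g : T -> nat) s :
  all (fun V => all (fun y => g y == hv g V) V) (runs f s) ->
  runs g s = map flatten (runs (hv g) (runs f s)).
Proof.
elim: s => [|x s IH] //= Hall.
have Hs : all (fun V => all (fun y => g y == hv g V) V) (runs f s).
  move: Hall (runs_nonnil f s); case: (runs f s) => [|[|y r] rest] //=.
  case: ifP => /eqP Hxy /=; last by rewrite eqxx.
  move=> /andP [/andP [_ /andP [/eqP Hy Hr]] ->] _.
  by rewrite eqxx /= andbT Hy.
rewrite (IH Hs) {IH}.
move: Hall (runs_nonnil f s) (runs_flatten f s).
case: (runs f s) => [|[|y r] rest] //.
have [R [rest2 E]] := runs_head (hv g) (y :: r) rest.
rewrite E /=.
case: ifP => /eqP Hxy.
- move=> /andP [/andP [_ /andP [/eqP Hy _]] _] _ _.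
  rewrite Hy eqxx.
  move: E => /=; rewrite Hy.
  case: (runs (hv g) rest) => [|[|V0 R0] rest0] /=; try case: ifP => _;
    by case=> <- <-.
- move=> _ _ _ /=.
  move: E => /=.
  case: (runs (hv g) rest) => [|[|V0 R0] rest0] /=;
    [ by case=> <- <- /=; case: ifP | by case=> <- <- /=; case: ifP
    | by case: ifP => _ /= ; case=> <- <- /=; case: ifP].
Qed.

Lemma runs_single (T : eqType) (h f : T -> nat) L :
  alt f L -> (forall V, V \in L -> h V = 2 -> f V = 2) ->
  forall R, R \in runs h L -> hv h R = 2 -> size R = 1.
Proof.
elim: L => [|V L IH] //= /andP [Hhd Halt] Hf R.
have IH' := IH Halt (fun W HW => Hf W (ltac:(by rewrite inE HW orbT))).
case: L IH Hhd IH' Halt Hf => [|W L] _ Hhd IH' Halt Hf.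
- by rewrite inE => /eqP ->.
- have [R1 [rest2 E]] := runs_head h W L.
  rewrite E /=; case: ifP => /eqP HVW.
  + rewrite inE => /orP [/eqP -> /= HV|HR].
    * have := Hf V (mem_head _ _) HV.
      have := Hf W (ltac:(by rewrite inE mem_head orbT)) (etrans (esym HVW) HV).
      move=> E1 E2; rewrite E1 E2 eqxx in Hhd; done.
    * by apply: IH'; rewrite E inE HR orbT.
  + rewrite inE => /orP [/eqP -> //|HR].
    by apply: IH'; rewrite E.
Qed.

Lemma runs_hasf1 (T : eqType) (h f : T -> nat) L :
  alt f L -> (forall V, V \in L -> f V = 1 \/ f V = 2) ->
  (forall V, V \in L -> f V = 1 -> h V = 1) ->
  forall R, R \in runs h L -> hv h R = 1 -> ~~ has (fun V => f V == 1) R ->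
  runs h L = [:: L].
Proof.
elim: L => [|V L IH] //= /andP [Hhd Halt] Hv Hf R.
have IH' := IH Halt (fun W HW => Hv W (ltac:(by rewrite inE HW orbT))) (fun W HW => Hf W (ltac:(by rewrite inE HW orbT))).
case: L IH Hhd IH' Halt Hf Hv => [|W L] _ Hhd IH' Halt Hf Hv.
- by [].
- have [R1 [rest2 E]] := runs_head h W L.
  rewrite E /=; case: ifP => /eqP HVW.
  + rewrite inE => /orP [/eqP -> /= HV|HR].
    * rewrite negb_or => /andP [HfV /norP [HfW _]].
      have HV2 : f V = 2 by case: (Hv V (mem_head _ _)) => // E1; rewrite E1 in HfV.
      have HW2 : f W = 2.
        by case: (Hv W (ltac:(by rewrite inE mem_head orbT))) => // E1; rewrite E1 in HfW.
      by rewrite HV2 HW2 in Hhd.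
    * move=> H1 H2; have := IH' R (ltac:(by rewrite E inE HR orbT)) H1 H2.
      by rewrite E => -[_ E3]; rewrite E3 in HR.
  + rewrite inE => /orP [/eqP -> /= HV|HR].
    * rewrite orbF => HfV.
      have HV2 : f V = 2 by case: (Hv V (mem_head _ _)) => // E1; rewrite E1 in HfV.
      have HW1 : f W = 1.
        case: (Hv W (ltac:(by rewrite inE mem_head orbT))) => // E1.
        by rewrite HV2 E1 in Hhd.
      have := Hf W (ltac:(by rewrite inE mem_head orbT)) HW1.
      by rewrite -HV => /esym.
    * move=> H1 H2; have := IH' R (ltac:(by rewrite E)) H1 H2.
      rewrite E => -[E3 E4]; subst rest2.
      move: HR; rewrite mem_seq1 => /eqP HR; subst R.
      exfalso; move: H2 => /hasPn H2.
      case: (Hv V (mem_head _ _)) => HV.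
      - by have := Hf V (mem_head _ _) HV; move: H1 => /= H1 E5; apply: HVW; rewrite E5 H1.
      - case: (Hv W (ltac:(by rewrite inE mem_head orbT))) => HW.
        + by move: (H2 W (mem_head _ _)); rewrite HW.
        + by rewrite HV HW in Hhd.
Qed.

Lemma block_uniq (T : eqType) (P : seq (seq T)) V1 V2 y :
  uniq (flatten P) -> V1 \in P -> V2 \in P -> y \in V1 -> y \in V2 -> V1 = V2.
Proof.
elim: P => [|V P IH] //=; rewrite cat_uniq => /and3P [_ Hdis Hu].
rewrite !inE => /orP [/eqP E1|H1] /orP [/eqP E2|H2] Hy1 Hy2.
- by rewrite E1 E2.
- subst V1; exfalso; move/hasPn: Hdis => /(_ y).
  by move=> /(_ (introT flattenP (ex_intro2 _ _ V2 H2 Hy2))); rewrite Hy1.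
- subst V2; exfalso; move/hasPn: Hdis => /(_ y).
  by move=> /(_ (introT flattenP (ex_intro2 _ _ V1 H1 Hy1))); rewrite Hy2.
- exact: IH.
Qed.

Section Alg.
Variables (F : fieldType) (B : algType F).

Lemma lin0 (p : B -> F) : is_lin_fun p -> p 0 = 0.
Proof.
move=> H; have := H 1 0 0; rewrite scaler0 addr0 mul1r => E.
by apply: (addrI (p 0)); rewrite addr0 -E.
Qed.

Lemma linD (p : B -> F) : is_lin_fun p -> forall x y, p (x + y) = p x + p y.
Proof. by move=> H x y; have := H 1 x y; rewrite scale1r mul1r. Qed.

Lemma linZ (p : B -> F) : is_lin_fun p -> forall c x, p (c *: x) = c * p x.
Proof. by move=> H c x; rewrite -(addr0 (c *: x)) H lin0 // addr0. Qed.

Lemma prod_lin (I : eqType) (r : seq I) (j : I) (f g h : I -> B) (lam : F) :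
  uniq r -> j \in r -> (forall i, i != j -> f i = g i /\ f i = h i) ->
  f j = g j + lam *: h j ->
  \prod_(i <- r) f i = \prod_(i <- r) g i + lam *: \prod_(i <- r) h i.
Proof.
move=> + + Hoth Hfj; elim: r => [|i r IH] //= /andP [Hi Hu].
rewrite inE => /orP [/eqP Eij | Hj]; rewrite !big_cons.
- subst i.
  have E1 : \prod_(k <- r) f k = \prod_(k <- r) g k.
    apply: eq_big_seq => k Hk; have Hkj : k != j by apply: contraNneq Hi => <-.
    by case: (Hoth k Hkj).
  have E2 : \prod_(k <- r) f k = \prod_(k <- r) h k.
    apply: eq_big_seq => k Hk; have Hkj : k != j by apply: contraNneq Hi => <-.
    by case: (Hoth k Hkj).
  by rewrite Hfj mulrDl -scalerAl -E1 -E2.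
- have Hij : i != j by apply: contraNneq Hi => ->.
  case: (Hoth i Hij) => Eg Eh.
  by rewrite IH // mulrDr scalerAr -Eg -Eh.
Qed.

Lemma prod_blocks_lin (I : eqType) (P : seq (seq I)) (Q : pred (seq I)) (j : I)
  (Gf Gg Gh : seq I -> F) (lam : F) :
  uniq (flatten P) -> j \in flatten P ->
  (forall V, V \in P -> j \in V -> Q V /\ Gf V = Gg V + lam * Gh V) ->
  (forall V, V \in P -> j \notin V -> Gf V = Gg V /\ Gf V = Gh V) ->
  \prod_(V <- P | Q V) Gf V =
    \prod_(V <- P | Q V) Gg V + lam * \prod_(V <- P | Q V) Gh V.
Proof.
elim: P => [|V P IH] //=; rewrite cat_uniq => /and3P [_ Hdis Hu].
rewrite mem_cat => Hj Hin Hout; rewrite !big_cons.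
have HinP : forall V', V' \in P -> j \in V' -> Q V' /\ Gf V' = Gg V' + lam * Gh V'.
  by move=> V' HV'; apply: Hin; rewrite inE HV' orbT.
have HoutP : forall V', V' \in P -> j \notin V' -> Gf V' = Gg V' /\ Gf V' = Gh V'.
  by move=> V' HV'; apply: Hout; rewrite inE HV' orbT.
case HjV : (j \in V).
- have HjP : j \notin flatten P.
    by apply: contra Hdis => HjP; apply/hasP; exists j.
  have E1 : \prod_(V' <- P | Q V') Gf V' = \prod_(V' <- P | Q V') Gg V'.
    rewrite big_seq_cond [RHS]big_seq_cond; apply: eq_bigr => V' /andP [HV' _].
    case: (HoutP V' HV') => //.
    by apply: contra HjP => HjV'; apply/flattenP; exists V'.
  have E2 : \prod_(V' <- P | Q V') Gf V' = \prod_(V' <- P | Q V') Gh V'.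
    rewrite big_seq_cond [RHS]big_seq_cond; apply: eq_bigr => V' /andP [HV' _].
    case: (HoutP V' HV') => //.
    by apply: contra HjP => HjV'; apply/flattenP; exists V'.
  case: (Hin V (mem_head _ _) HjV) => -> ->.
  rewrite mulrDl -mulrA; congr (_ + _); [by rewrite E1 | by rewrite E2].
- move: Hj; rewrite HjV /= => Hj.
  case: (Hout V (mem_head _ _) (negbT HjV)) => Eg Eh.
  rewrite (IH Hu Hj HinP HoutP) -Eg -Eh.
  case: (Q V) => //.
  by rewrite mulrDr mulrCA.
Qed.

Lemma center (I : eqType) (ps : B -> F) (Hl : is_lin_fun ps) (ps1 : ps 1 = 1)
  (bb : I -> B) (s : seq I) (tau : F) (c0 : I -> F) :
  uniq s -> s != [::] -> exists c : I -> F, (forall i, i \notin s -> c i = c0 i) /\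
    ps (\prod_(i <- s) (bb i + (c i)%:A)) = tau.
Proof.
elim: s tau c0 => [|i s IH] //= tau c0 /andP [Hi Hu] _.
case: (altP (s =P [::])) => Hs.
- subst s; exists (fun k => if k == i then tau - ps (bb i) else c0 k); split.
    by move=> k; rewrite inE => /negPf ->.
  rewrite big_cons big_nil mulr1 eqxx linD // -[_%:A]/(_ *: 1) linZ // ps1 mulr1.
  by rewrite addrC subrK.
- have [c' [Hc'1 Hc'2]] := IH 1 c0 Hu Hs.
  set Pi := \prod_(k <- s) (bb k + (c' k)%:A).
  exists (fun k => if k == i then tau - ps (bb i * Pi) else c' k); split.
    move=> k; rewrite inE negb_or => /andP [/negPf -> Hk]; exact: Hc'1.
  rewrite big_cons eqxx.
  have -> : \prod_(k <- s) (bb k + (if k == i then tau - ps (bb i * Pi) else c' k)%:A) = Pi.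
    apply: eq_big_seq => k Hk; have /negPf -> // : k != i.
    by apply: contraNneq Hi => <-.
  rewrite mulrDl linD // mulr_algl linZ // Hc'2 mulr1.
  by rewrite addrC subrK.
Qed.

Lemma center_all (I : eqType) (ps : B -> F) (Hl : is_lin_fun ps) (ps1 : ps 1 = 1)
  (bb : I -> B) (P : seq (seq I)) (sel : seq I -> seq I) :
  uniq (flatten P) -> (forall V, uniq (sel V)) -> (forall V i, i \in sel V -> i \in V) ->
  exists c : I -> F, forall V, V \in P -> sel V != [::] ->
    ps (\prod_(i <- sel V) (bb i + (c i)%:A)) = 0.
Proof.
move=> + Hsu Hsel; elim: P => [|V P IH] /=.
  by move=> _; exists (fun _ => 0).
rewrite cat_uniq => /and3P [_ Hdis Hu].
have [c' Hc'] := IH Hu.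
case: (altP (sel V =P [::])) => Hs.
- exists c' => V'; rewrite inE => /orP [/eqP -> | HV']; first by rewrite Hs.
  exact: Hc'.
- have [c [Hc1 Hc2]] := center Hl ps1 bb 0 c' (Hsu V) Hs.
  exists c => V'; rewrite inE => /orP [/eqP -> // | HV'] Hne.
  rewrite -(Hc' V' HV' Hne); congr (ps _); apply: eq_big_seq => k Hk.
  rewrite Hc1 //; apply: contra Hdis => HkV.
  apply/hasP; exists k; last exact: Hsel HkV.
  by apply/flattenP; exists V'; last exact: Hsel Hk.
Qed.

End Alg.
Section Main.
Variables (F : fieldType) (A : lmodType F) (mul : A -> A -> A) (phi : A -> F)
  (Asub : nat -> side -> A -> Prop).
Hypothesis Hsub : forall k s, (k = 1 \/ k = 2)%N -> is_subalg mul (Asub k s).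
Variables (B : algType F) (jm : nat -> side -> A -> B) (pt ps : B -> F).
Hypothesis Hjm : forall k s, (k = 1 \/ k = 2)%N ->
          ((forall (c : F) x y, Asub k s x -> Asub k s y ->
             jm k s (c *: x + y) = c *: jm k s x + jm k s y) /\
          (forall x y, Asub k s x -> Asub k s y ->
             jm k s (mul x y) = jm k s x * jm k s y)).
Hypotheses (Hpt : is_lin_fun pt) (Hps : is_lin_fun ps) (pt1 : pt 1 = 1) (ps1 : ps 1 = 1).
Hypothesis Hcb : cbifree_cond
          (fun k s b => (k = 1 \/ k = 2)%N /\
                        exists (c : F) x, Asub k s x /\ b = c%:A + jm k s x)
          pt ps.
Hypothesis H1 : forall (m : nat) (chi : 'I_m -> side) (x : 'I_m -> A),
           (forall i, Asub 1%N (chi i) (x i)) ->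
           pt (\prod_(i < m) jm 1%N (chi i) (x i)) =
             wordval mul phi [seq x i | i <- enum 'I_m] /\
           ps (\prod_(i < m) jm 1%N (chi i) (x i)) = (m == 0%N)%:R.
Hypothesis H2 : forall (m : nat) (chi : 'I_m -> side) (x : 'I_m -> A),
           (forall i, Asub 2%N (chi i) (x i)) ->
           pt (\prod_(i < m) jm 2%N (chi i) (x i)) =
             wordval mul phi [seq x i | i <- enum 'I_m] /\
           ps (\prod_(i < m) jm 2%N (chi i) (x i)) =
             wordval mul phi [seq x i | i <- enum 'I_m].
Variables (n : nat) (Hn : (0 < n)%N) (chi : 'I_n -> side) (omega : 'I_n -> nat).
Hypothesis Homega : forall j, omega j = 1%N \/ omega j = 2%N.
Variable a : 'I_n -> A.
Hypothesis Ha : forall j, Asub (omega j) (chi j) (a j).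

Definition j0 : 'I_n := Ordinal Hn.
Definition bb (j : 'I_n) : B := jm (omega j) (chi j) (a j).

Lemma jm0 k s : (k = 1 \/ k = 2)%N -> jm k s 0 = 0.
Proof.
move=> Hk; case: (Hsub s Hk) => P0 _ _.
have := (Hjm s Hk).1 1 0 0 P0 P0; rewrite scaler0 addr0 scale1r => E.
by apply: (addrI (jm k s 0)); rewrite addr0 -E.
Qed.

Lemma reindex (k : nat) (p : seq 'I_n) : (k = 1 \/ k = 2)%N ->
  (forall i, i \in p -> omega i = k) ->
  \prod_(i <- p) bb i = \prod_(i < size p) jm k (chi (nth j0 p i)) (a (nth j0 p i)) /\
  (forall i : 'I_(size p), Asub k (chi (nth j0 p i)) (a (nth j0 p i))) /\
  [seq a (nth j0 p i) | i : 'I_(size p) <- enum 'I_(size p)] = [seq a i | i <- p].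
Proof.
move=> Hk Hp; split; [|split].
- rewrite (big_nth j0) big_mkord; apply: eq_bigr => i _.
  by rewrite /bb Hp // mem_nth.
- move=> i; rewrite -(Hp (nth j0 p i)) ?mem_nth //; exact: Ha.
- by rewrite -[in RHS](mkseq_nth j0 p) /mkseq -val_enum_ord -!map_comp.
Qed.

Lemma pair1_ps (p : seq 'I_n) : (forall i, i \in p -> omega i = 1%N) -> p != [::] ->
  ps (\prod_(i <- p) bb i) = 0.
Proof.
move=> Hp Hne; have [E [HA _]] := reindex (or_introl erefl) Hp.
rewrite E; have [_ ->] := H1 HA.
by move: Hne; rewrite -size_eq0 => /negPf ->.
Qed.

Lemma pair1_pt (p : seq 'I_n) : (forall i, i \in p -> omega i = 1%N) ->
  pt (\prod_(i <- p) bb i) = wordval mul phi [seq a i | i <- p].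
Proof.
move=> Hp; have [E [HA Hm]] := reindex (or_introl erefl) Hp.
by rewrite E; have [-> _] := H1 HA; rewrite Hm.
Qed.

Lemma pair2 (p : seq 'I_n) : (forall i, i \in p -> omega i = 2%N) ->
  pt (\prod_(i <- p) bb i) = wordval mul phi [seq a i | i <- p] /\
  ps (\prod_(i <- p) bb i) = wordval mul phi [seq a i | i <- p].
Proof.
move=> Hp; have [E [HA Hm]] := reindex (or_intror erefl) Hp.
by rewrite E; have [-> ->] := H2 HA; rewrite Hm.
Qed.

Definition xx (m : {set 'I_n}) (c : 'I_n -> F) (j : 'I_n) : B :=
  if omega j == 1%N then bb j else if j \in m then bb j + (c j)%:A else 1.

Lemma pt_ps2 m c (r : seq 'I_n) : (forall i, i \in r -> omega i = 2%N) ->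
  pt (\prod_(i <- r) xx m c i) = ps (\prod_(i <- r) xx m c i).
Proof.
move=> Hr.
suff H : forall p, (forall i, i \in p -> omega i = 2%N) ->
    pt ((\prod_(i <- p) bb i) * \prod_(i <- r) xx m c i) =
    ps ((\prod_(i <- p) bb i) * \prod_(i <- r) xx m c i).
  by have := H [::] (fun i (Hi : i \in [::]) => ltac:(by rewrite in_nil in Hi)); rewrite big_nil !mul1r.
elim: r Hr => [|i r IH] Hr p Hp.
- by rewrite big_nil !mulr1; have [-> ->] := pair2 Hp.
- have Hi : omega i = 2%N := Hr i (mem_head _ _).
  have Hr' : forall k, k \in r -> omega k = 2%N by move=> k Hk; apply: Hr; rewrite inE Hk orbT.
  rewrite big_cons /xx Hi /=.
  case: (i \in m).
  + rewrite mulrDl mulr_algl mulrDr -scalerAr mulrA.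
    have -> : \prod_(k <- p) bb k * bb i = \prod_(k <- rcons p i) bb k by rewrite big_rcons.
    rewrite !(linD Hpt) !(linD Hps) !(linZ Hpt) !(linZ Hps).
    have Hpi : forall k, k \in rcons p i -> omega k = 2%N.
      by move=> k; rewrite mem_rcons inE => /orP [/eqP -> //|]; apply: Hp.
    by rewrite (IH Hr' _ Hp) (IH Hr' _ Hpi).
  + by rewrite mul1r; apply: (IH Hr').
Qed.

Definition pi := pi_co chi omega.
Definition K := pt (\prod_(j < n) xx set0 (fun _ => 0) j).
Definition Rr (e : 'I_n -> B) :=
  \prod_(V <- pi | blockval omega V == 2%N) ps (\prod_(j <- incr V) e j).
Definition Dl (e : 'I_n -> B) := pt (\prod_(j < n) e j) - K * Rr e.

Lemma s_uniq : uniq (ord_chi chi).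
Proof.
rewrite /ord_chi cat_uniq; apply/and3P; split;
  [exact: filter_uniq (enum_uniq _) | | by rewrite rev_uniq; exact: filter_uniq (enum_uniq _)].
apply/hasPn => i; rewrite mem_rev !mem_filter => /andP [/negPf H _].
by rewrite H.
Qed.

Lemma s_all j : j \in ord_chi chi.
Proof.
rewrite /ord_chi mem_cat mem_rev; case E: (Defs.is_left (chi j));
  [apply/orP; left | apply/orP; right]; rewrite mem_filter E /= mem_enum //.
Qed.

Lemma pi_flat : flatten pi = ord_chi chi.
Proof. exact: runs_flatten. Qed.

Lemma pi_uniq : uniq (flatten pi).
Proof. by rewrite pi_flat s_uniq. Qed.

Lemma pi_mem j : exists2 V, V \in pi & j \in V.
Proof. by apply/flattenP; rewrite pi_flat s_all. Qed.

Lemma pi_val V y : V \in pi -> y \in V -> omega y = blockval omega V.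
Proof.
move=> HV; have := allP (runs_const omega (ord_chi chi)) V HV.
case: V HV => [|x r] // _ Hr; rewrite inE => /orP [/eqP -> //|Hy].
by move/allP: Hr => /(_ y Hy) /eqP.
Qed.

Lemma pi_nonnil V : V \in pi -> exists x r, V = x :: r.
Proof.
move=> HV; have := allP (runs_nonnil omega (ord_chi chi)) V HV.
by case: V HV => [|x r] //; exists x, r.
Qed.

Lemma incr_mem (V : seq 'I_n) (i : 'I_n) : (i \in incr V) = (i \in V).
Proof. by rewrite mem_filter mem_enum andbT. Qed.

Lemma incr_uniq (V : seq 'I_n) : uniq (incr V).
Proof. exact: filter_uniq (enum_uniq _). Qed.

Definition upd (c : 'I_n -> F) (j : 'I_n) (d : F) := fun i => if i == j then d else c i.

Lemma Dl_step (m : {set 'I_n}) (c : 'I_n -> F) (j : 'I_n) : j \in m -> omega j = 2%N ->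
  Dl (xx m c) = Dl (xx m (upd c j 0)) + c j * Dl (xx (m :\ j) c).
Proof.
move=> Hjin Hjo.
have Hoth : forall i, i != j -> xx m c i = xx m (upd c j 0) i /\ xx m c i = xx (m :\ j) c i.
  by move=> i Hij; rewrite /xx /upd (negPf Hij) in_setD1 Hij.
have Hj : xx m c j = xx m (upd c j 0) j + c j *: xx (m :\ j) c j.
  by rewrite /xx /upd Hjo eqxx Hjin setD11 /= scale0r addr0.
have HR : Rr (xx m c) = Rr (xx m (upd c j 0)) + c j * Rr (xx (m :\ j) c).
  have Hin : forall V, V \in pi -> j \in V -> (blockval omega V == 2%N) /\
      ps (\prod_(i <- incr V) xx m c i) = ps (\prod_(i <- incr V) xx m (upd c j 0) i)
        + c j * ps (\prod_(i <- incr V) xx (m :\ j) c i).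
    move=> V HV HjV; split; first by rewrite -(pi_val HV HjV) Hjo.
    rewrite (prod_lin (incr_uniq V) _ Hoth Hj) ?incr_mem //.
    by rewrite (linD Hps) (linZ Hps).
  have Hout : forall V, V \in pi -> j \notin V ->
      ps (\prod_(i <- incr V) xx m c i) = ps (\prod_(i <- incr V) xx m (upd c j 0) i) /\
      ps (\prod_(i <- incr V) xx m c i) = ps (\prod_(i <- incr V) xx (m :\ j) c i).
    move=> V HV HjV; split; congr (ps _); apply: eq_big_seq => i; rewrite incr_mem => Hi;
      have Hij : i != j by apply: contraNneq HjV => <-.
    + by case: (Hoth i Hij).
    + by case: (Hoth i Hij).
  have Hjf : j \in flatten pi by rewrite pi_flat s_all.
  exact: (prod_blocks_lin pi_uniq Hjf Hin Hout).
rewrite /Dl HR (prod_lin (index_enum_uniq _) (mem_index_enum j) Hoth Hj).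
rewrite (linD Hpt) (linZ Hpt).
by rewrite mulrDr opprD addrACA mulrBr mulrCA.
Qed.

Lemma Dl_indep (m : {set 'I_n}) : (forall j, j \in m -> omega j = 2%N) ->
  (forall j, j \in m -> forall c, Dl (xx (m :\ j) c) = 0) ->
  forall c c', Dl (xx m c) = Dl (xx m c').
Proof.
move=> Hm IH c c'.
have step : forall c1 j d, Dl (xx m c1) = Dl (xx m (upd c1 j d)).
  move=> c1 j d; case Hj: (j \in m).
  - rewrite (Dl_step c1 Hj (Hm j Hj)) IH // mulr0 addr0.
    rewrite (Dl_step (upd c1 j d) Hj (Hm j Hj)) IH // mulr0 addr0.
    congr (Dl (xx m _)); apply: functional_extensionality => i; rewrite /upd.
    by case: (i == j).
  - congr Dl; apply: functional_extensionality => i; rewrite /xx /upd.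
    case: (altP (i =P j)) => [->|] //.
    by rewrite Hj.
have H : forall r : seq 'I_n, Dl (xx m c) = Dl (xx m (fun i => if i \in r then c' i else c i)).
  elim => [|i r IHr].
  - by congr (Dl (xx m _)); apply: functional_extensionality => k; rewrite ?in_nil.
  - rewrite IHr (step _ i (c' i)); congr (Dl (xx m _)); apply: functional_extensionality => k.
    rewrite /upd inE; case: (altP (k =P i)) => [->|/negPf Hki]; first by rewrite ?eqxx.
    by [].
rewrite (H (enum 'I_n)); congr (Dl (xx m _)); apply: functional_extensionality => k.
by rewrite mem_enum.
Qed.

Lemma Dl_base (c : 'I_n -> F) : Dl (xx set0 c) = 0.
Proof.
have Ex : xx set0 c = xx set0 (fun _ => 0).
  by apply: functional_extensionality => i; rewrite /xx in_set0.
rewrite /Dl Ex -/K.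
suff -> : Rr (xx set0 (fun _ => 0)) = 1 by rewrite mulr1 subrr.
rewrite /Rr big_seq_cond; apply: big1 => V /andP [HV HV2].
rewrite big1_seq ?ps1 // => i /andP [_ Hi].
rewrite incr_mem in Hi.
by rewrite /xx in_set0 (pi_val HV Hi) (eqP HV2).
Qed.
Hypothesis Hlast : forall (m : nat) (chi : 'I_m -> side) (omega : 'I_m -> nat)
               (x : 'I_m -> A),
          (forall i, omega i = 1%N \/ omega i = 2%N) ->
          (forall i, Asub (omega i) (chi i) (x i)) ->
          wordval mul phi [seq x i | i <- enum 'I_m] =
            pt (\prod_(i < m) jm (omega i) (chi i) (x i)).

Definition meets (m : {set 'I_n}) (V : seq 'I_n) := has (fun i => i \in m) V.
Definition sel (m : {set 'I_n}) (V : seq 'I_n) := [seq i <- incr V | i \in m].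

Lemma blk2 (m : {set 'I_n}) (c : 'I_n -> F) (V : seq 'I_n) :
  V \in pi -> blockval omega V = 2%N ->
  \prod_(i <- incr V) xx m c i = \prod_(i <- sel m V) (bb i + (c i)%:A).
Proof.
move=> HV HV2; rewrite /sel big_filter [RHS]big_mkcond; apply: eq_big_seq => i.
rewrite incr_mem => Hi; rewrite /xx (pi_val HV Hi) HV2 /=.
by case: (i \in m).
Qed.

Lemma sel_ne (m : {set 'I_n}) (V : seq 'I_n) : (sel m V != [::]) = meets m V.
Proof. by rewrite /sel -has_filter /meets; apply: eq_has_r => i; rewrite incr_mem. Qed.

Lemma meets2 (m : {set 'I_n}) (V : seq 'I_n) : (forall j, j \in m -> omega j = 2%N) ->
  V \in pi -> meets m V -> blockval omega V = 2%N.
Proof. by move=> Hm HV /hasP [i Hi Him]; rewrite -(pi_val HV Hi) Hm. Qed.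

Lemma prod0 (I : eqType) (P : seq I) (Q : pred I) (G : I -> F) V :
  V \in P -> Q V -> G V = 0 -> \prod_(W <- P | Q W) G W = 0.
Proof.
move=> HV HQ HG; apply/eqP; rewrite prodf_seq_eq0; apply/hasP; exists V => //.
by rewrite HQ HG eqxx.
Qed.

Definition om' (m : {set 'I_n}) (j : 'I_n) : nat :=
  if has (fun V => (j \in V) && meets m V) pi then 2%N else 1%N.

Lemma om'_blk (m : {set 'I_n}) (V : seq 'I_n) (y : 'I_n) :
  V \in pi -> y \in V -> om' m y = if meets m V then 2%N else 1%N.
Proof.
move=> HV Hy; rewrite /om'; congr (if _ then _ else _).
apply/hasP/idP => [[V' HV' /andP [HyV' HmV']] | HmV].
- by rewrite (block_uniq pi_uniq HV HV' Hy HyV').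
- by exists V => //; rewrite Hy.
Qed.

Lemma hv_om' (m : {set 'I_n}) (V : seq 'I_n) :
  V \in pi -> hv (om' m) V = if meets m V then 2%N else 1%N.
Proof.
move=> HV; have [x [r E]] := pi_nonnil HV.
by subst V; exact: (om'_blk m HV (mem_head _ _)).
Qed.

Lemma pi'_eq (m : {set 'I_n}) : pi_co chi (om' m) = map flatten (runs (hv (om' m)) pi).
Proof.
rewrite /pi /pi_co; apply: runs_coarsen; apply/allP => V HV; apply/allP => y Hy.
by rewrite (om'_blk m HV Hy) (hv_om' m HV).
Qed.

Lemma alt_pi : alt (hv omega) pi.
Proof. exact: runs_alt. Qed.

Lemma pi_hv12 V : V \in pi -> hv omega V = 1%N \/ hv omega V = 2%N.
Proof. by move=> HV; have [x [r E]] := pi_nonnil HV; rewrite E; exact: Homega. Qed.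

Lemma Dl_zero (m : {set 'I_n}) (c : 'I_n -> F) (j1 : 'I_n) :
  (forall j, j \in m -> omega j = 2%N) -> j1 \in m ->
  (forall V, V \in pi -> sel m V != [::] ->
     ps (\prod_(i <- sel m V) (bb i + (c i)%:A)) = 0) ->
  Dl (xx m c) = 0.
Proof.
move=> Hm Hj1 Hc.
have [V0 HV0 Hj1V0] := pi_mem j1.
have HmV0 : meets m V0 by apply/hasP; exists j1.
have HV02 : blockval omega V0 = 2%N := meets2 Hm HV0 HmV0.
have Hcent : forall V, V \in pi -> meets m V -> ps (\prod_(i <- incr V) xx m c i) = 0.
  move=> V HV HmV; rewrite (blk2 _ _ HV (meets2 Hm HV HmV)); apply: Hc => //.
  by rewrite sel_ne.
have HR : Rr (xx m c) = 0.
  by apply: (prod0 HV0); [rewrite HV02 | exact: Hcent].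
set om := om' m.
have Hcent' : forall V, V \in pi_co chi om -> ps (\prod_(i <- incr V) xx m c i) = 0.
  move=> V'; rewrite pi'_eq => /mapP [R HR' ->].
  have := allP (runs_nonnil (hv om) pi) R HR'.
  case: R HR' => [|V1 R1] HR' // _.
  have HRc : all (fun W => hv om W == hv om V1) R1 := allP (runs_const (hv om) pi) _ HR'.
  have HinR : forall W, W \in V1 :: R1 -> W \in pi.
    move=> W HW; rewrite -(runs_flatten (hv om) pi); apply/flattenP; by exists (V1 :: R1).
  have HvalR : forall W, W \in V1 :: R1 -> hv om W = hv om V1.
    move=> W; rewrite inE => /orP [/eqP -> // | HW].
    by move/allP: HRc => /(_ W HW) /eqP.
  have HV1 := HinR V1 (mem_head _ _).
  case HmV1 : (meets m V1).
  - have Hs : size (V1 :: R1) = 1%N.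
      apply: (runs_single (f := hv omega) alt_pi _ HR').
      + move=> V HV; rewrite hv_om' //; case: ifP => // HmV _.
        exact: meets2 Hm HV HmV.
      + by rewrite /= hv_om' // HmV1.
    case: R1 HR' HRc HinR HvalR Hs => // HR' _ _ _ _ /=.
    rewrite cats0; exact: Hcent.
  - case Hf1 : (has (fun W => hv omega W == 1%N) (V1 :: R1)).
    + move/hasP: Hf1 => [W1 HW1 /eqP HW1v].
      have HW1pi := HinR W1 HW1.
      have [i1 [r1 E1]] := pi_nonnil HW1pi.
      have Hprod : \prod_(i <- incr (flatten (V1 :: R1))) xx m c i =
          \prod_(i <- [seq i <- incr (flatten (V1 :: R1)) | omega i == 1%N]) bb i.
        rewrite big_filter [RHS]big_mkcond; apply: eq_big_seq => i.
        rewrite incr_mem => /flattenP [W HW HiW].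
        have HWpi := HinR W HW.
        have HmW : meets m W = false.
          by have := HvalR W HW; rewrite !hv_om' // HmV1; case: (meets m W).
        have Him : (i \in m) = false.
          apply: negbTE; apply: contraFN HmW => Him; apply/hasP; by exists i.
        by rewrite /xx Him; case: (omega i == 1%N).
      rewrite Hprod; apply: pair1_ps.
      * by move=> i; rewrite mem_filter => /andP [/eqP].
      * have Hi1W1 : i1 \in W1 by rewrite E1 mem_head.
        have Ho1 : omega i1 = 1%N by rewrite (pi_val HW1pi Hi1W1); exact: HW1v.
        apply/eqP => E; have : i1 \in [seq i <- incr (flatten (V1 :: R1)) | omega i == 1%N].
          rewrite mem_filter incr_mem Ho1 eqxx andTb.
          by apply/flattenP; exists W1.
        by rewrite E.
    + have Hf1h : forall V, V \in pi -> hv omega V = 1%N -> hv om V = 1%N.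
        move=> V HV HV1'; rewrite hv_om' //; case: ifP => // HmV.
        have E : hv omega V = 2%N := meets2 Hm HV HmV.
        by rewrite HV1' in E.
      have Hall := runs_hasf1 alt_pi pi_hv12 Hf1h HR'
          (ltac:(by rewrite /= hv_om' // HmV1)) (negbT Hf1).
      move: HR'; rewrite Hall mem_seq1 => /eqP EP.
      have := HvalR V0 (ltac:(by rewrite EP)).
      by rewrite !hv_om' // HmV0 HmV1.
have Helem : forall j, (fun k s b => (k = 1 \/ k = 2)%N /\ exists (c0 : F) x0,
     Asub k s x0 /\ b = c0%:A + jm k s x0) (om j) (chi j) (xx m c j).
  move=> j; have [Vj HVj Hj] := pi_mem j.
  have Homj := om'_blk m HVj Hj.
  have Hom12 : (om j = 1 \/ om j = 2)%N by rewrite /om /om'; case: ifP; auto.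
  split => //.
  rewrite /xx; case: (Homega j) => Hoj.
  - have HnV : ~~ meets m Vj.
      apply/negP => HmVj; have := meets2 Hm HVj HmVj.
      by rewrite -(pi_val HVj Hj) Hoj.
    have Hom1 : om j = 1%N by rewrite /om Homj (negPf HnV).
    exists 0, (a j); rewrite Hom1 Hoj /= scale0r add0r; split.
    + by have := Ha j; rewrite Hoj.
    + by rewrite /bb Hoj.
  - rewrite Hoj /=; case Hjm' : (j \in m).
    + have HmVj : meets m Vj by apply/hasP; exists j.
      have Hom2 : om j = 2%N by rewrite /om Homj HmVj.
      exists (c j), (a j); rewrite Hom2; split.
      * by have := Ha j; rewrite Hoj.
      * by rewrite addrC /bb Hoj.
    + exists 1, 0; split.
      * by case: (Hsub (chi j) Hom12) => P0 _ _.
      * by rewrite jm0 // addr0 scale1r.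
have [_ Hpt'] := @Hcb n chi om (xx m c) Hn Helem Hcent'.
have HL : pt (\prod_(j < n) xx m c j) = 0.
  rewrite Hpt'; apply: (prod0 (V := V0)) => //.
  - rewrite pi'_eq.
    have : V0 \in flatten (runs (hv om) pi) by rewrite runs_flatten.
    case/flattenP => R0 HR0 HV0R0.
    have := allP (runs_nonnil (hv om) pi) R0 HR0.
    case: R0 HR0 HV0R0 => [|V2 R2] HR0 HV0R0 // _.
    have HRc : all (fun W => hv om W == hv om V2) R2 := allP (runs_const (hv om) pi) _ HR0.
    have Hv02 : hv om V0 = hv om V2.
      move: HV0R0; rewrite inE => /orP [/eqP -> // | HW].
      by move/allP: HRc => /(_ V0 HW) /eqP.
    have Hs : size (V2 :: R2) = 1%N.
      apply: (runs_single (f := hv omega) alt_pi _ HR0).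
      + move=> V HV; rewrite hv_om' //; case: ifP => // HmV _.
        exact: meets2 Hm HV HmV.
      + by rewrite /= -Hv02 hv_om' // HmV0.
    case: R2 HR0 HV0R0 HRc Hv02 Hs => // HR0 HV0R0 _ _ _.
    move: HV0R0; rewrite mem_seq1 => /eqP EV; subst V2.
    apply/mapP; exists [:: V0] => //=; by rewrite cats0.
  - rewrite pt_ps2; first exact: Hcent.
    by move=> i; rewrite incr_mem => Hi; rewrite (pi_val HV0 Hi) HV02.
by rewrite /Dl HL HR mulr0 subrr.
Qed.

Lemma Dl_all k : forall m : {set 'I_n}, (#|m| <= k)%N ->
  (forall j, j \in m -> omega j = 2%N) -> forall c, Dl (xx m c) = 0.
Proof.
elim: k => [|k IHk] m Hk Hm c.
- by move: Hk; rewrite leqn0 cards_eq0 => /eqP ->; exact: Dl_base.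
- case: (set_0Vmem m) => [->|[j1 Hj1]]; first exact: Dl_base.
  have IHm : forall j, j \in m -> forall c1, Dl (xx (m :\ j) c1) = 0.
    move=> j Hj c1; apply: IHk.
    + by move: Hk; rewrite (cardsD1 j m) Hj add1n ltnS.
    + by move=> i; rewrite in_setD1 => /andP [_ Hi]; apply: Hm.
  have Hsu : forall V, uniq (sel m V) by move=> V; apply: filter_uniq; exact: incr_uniq.
  have Hsel : forall V i, i \in sel m V -> i \in V.
    by move=> V i; rewrite mem_filter incr_mem => /andP [_].
  have [cs Hcs] := center_all Hps ps1 bb pi_uniq Hsu Hsel.
  by rewrite (Dl_indep Hm IHm c cs); exact: Dl_zero Hm Hj1 Hcs.
Qed.

Lemma main_sec :
  wordval mul phi [seq a i | i <- enum 'I_n] =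
    wordval mul phi [seq a i | i <- [seq j <- enum 'I_n | omega j == 1%N]] *
    \prod_(V <- pi_co chi omega | blockval omega V == 2%N)
       wordval mul phi [seq a i | i <- incr V].
Proof.
have Hm2 : forall j, j \in [set j | omega j == 2%N] -> omega j = 2%N.
  by move=> j; rewrite inE => /eqP.
have HD := Dl_all (leqnn #|[set j | omega j == 2%N]|) Hm2 (fun _ => 0).
have Ex : xx [set j | omega j == 2%N] (fun _ => 0) = bb.
  apply: functional_extensionality => j; rewrite /xx inE scale0r addr0.
  by case: (Homega j) => ->.
rewrite Ex /Dl in HD; move/eqP: HD; rewrite subr_eq0 => /eqP HD.
rewrite (@Hlast n chi omega a Homega Ha).
change (\prod_(i < n) jm (omega i) (chi i) (a i)) with (\prod_(i < n) bb i).
rewrite HD; congr (_ * _).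
- rewrite /K.
  have -> : \prod_(j < n) xx set0 (fun _ => 0) j =
      \prod_(j <- [seq j <- enum 'I_n | omega j == 1%N]) bb j.
    rewrite big_filter [RHS]big_mkcond [index_enum _]unlock -enumT; apply: eq_bigr => j _.
    by rewrite /xx in_set0; case: (omega j == 1%N).
  by rewrite pair1_pt // => i; rewrite mem_filter => /andP [/eqP].
- rewrite /Rr /pi big_seq_cond [RHS]big_seq_cond; apply: eq_bigr => V /andP [HV HV2].
  have Hp : forall i, i \in incr V -> omega i = 2%N.
    by move=> i; rewrite incr_mem => Hi; rewrite (pi_val HV Hi) (eqP HV2).
  by case: (pair2 Hp) => _ ->.
Qed.

End Main.

Theorem lemma2p5 (F : fieldType) (A : lmodType F) (mul : A -> A -> A)
  (Halg : is_nonunital_alg mul)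
  (phi : A -> F) (Hphi : is_lin_fun phi)
  (Hphi1 : forall e, is_unit_of mul e -> phi e = 1)
  (Asub : nat -> side -> A -> Prop)
  (Hsub : forall k s, (k = 1 \/ k = 2)%N -> is_subalg mul (Asub k s))
  (Hind : bimonotone_indep mul phi Asub)
  (n : nat) (Hn : (0 < n)%N) (chi : 'I_n -> side) (omega : 'I_n -> nat)
  (Homega : forall j, omega j = 1%N \/ omega j = 2%N)
  (a : 'I_n -> A) (Ha : forall j, Asub (omega j) (chi j) (a j)) :
  wordval mul phi [seq a i | i <- enum 'I_n] =
    wordval mul phi [seq a i | i <- [seq j <- enum 'I_n | omega j == 1%N]] *
    \prod_(V <- pi_co chi omega | blockval omega V == 2%N)
       wordval mul phi [seq a i | i <- incr V].
Proof.
case: Hind => B [jm [pt [ps [Hjm [[Hpt [Hps [pt1 ps1]]] [Hcb [H1 [H2 Hlast]]]]]]]].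
exact: (main_sec Hsub Hjm Hpt Hps ps1 Hcb H1 H2 Hn Homega Ha Hlast).
Qed.
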